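(* Let $S$ be a semibounded relation in $\mathfrak H$ with lower bound $\gamma\in\mathbb R$. Then: (a) $S_{\rm F}=\{\{\varphi,\varphi'\}\in S^*:\varphi\in\mathrm{dom}\,\bar{\mathfrak t}(S)\}$; and if $H$ is a selfadjoint extension of $S$ with $\mathrm{dom}\,H\subset\mathrm{dom}\,\bar{\mathfrak t}(S)$, then $H=S_{\rm F}$. (b) $S_{\rm f}=S\,\widehat+\,(\{0\}\times\mathrm{mul}\,S^* )$; and if $H$ is a symmetric extension of $S$ with $\mathrm{dom}\,H\subset\mathrm{dom}\,S$, then $H\subset S_{\rm f}$. (c) $S_{\rm f}=S_{\rm F}$ if and only if $\mathrm{dom}\,S=\overline{\mathrm{dom}}\,S\cap\mathrm{dom}\,S^*$; in particular this holds if $\mathrm{dom}\,S$ is closed.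
   Context: Linear relations in $\mathfrak H$ are linear subspaces of $\mathfrak H\times\mathfrak H$; $\mathrm{dom},\mathrm{mul}\,T=\{g:\{0,g\}\in T\}$; $T^*=\{\{h,k\}:(k,f)=(h,g)\ \forall\{f,g\}\in T\}$; $T^{**}$ is the closure; products $RT=\{\{f,h\}:\exists g,\{f,g\}\in T,\{g,h\}\in R\}$; $c+T=\{\{f,g+cf\}:\{f,g\}\in T\}$; $A\,\widehat+\,B=\{\{f+h,g+k\}:\{f,g\}\in A,\{h,k\}\in B\}$. $T$ is symmetric if $T\subset T^*$, selfadjoint if $T=T^*$. $S$ is semibounded with lower bound $\gamma$ if $\gamma$ is the supremum of all $c$ with $(\varphi',\varphi)\ge c\|\varphi\|^2$ for all $\{\varphi,\varphi'\}\in S$. $\mathfrak t(S)[\varphi,\psi]=(\varphi',\psi)$ on $\mathrm{dom}\,S$; $\bar{\mathfrak t}(S)$ is its closure. For $c\le\gamma$ let $Q_c$ be a representing map for $\mathfrak t(S)-c$, i.e. a linear operator into a Hilbert space with $\mathrm{dom}\,Q_c=\mathrm{dom}\,S$ and $\mathfrak t(S)[\varphi,\psi]=c(\varphi,\psi)+(Q_c\varphi,Q_c\psi)$. The Friedrichs extension is $S_{\rm F}=c+Q_c^*Q_c^{**}$ (the selfadjoint relation associated with the closed form $\bar{\mathfrak t}(S)$) and the weak Friedrichs extension is $S_{\rm f}=c+Q_c^*Q_c$; both are independent of the choice of $c$ and $Q_c$ and satisfy $S\subset S_{\rm f}\subset S_{\rm F}$. *)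

(* Defs.v *)
From HB Require Import structures.
From mathcomp Require Import all_boot all_order all_algebra.
From mathcomp Require Import complex.
From mathcomp Require Import boolp classical_sets reals.
Set Implicit Arguments. Unset Strict Implicit. Unset Printing Implicit Defensive.
Import Order.TTheory GRing.Theory Num.Theory.
Local Open Scope ring_scope.
Local Open Scope classical_set_scope.
Local Open Scope complex_scope.

Section Hilbert.
Variables (R : realType) (H : lmodType R[i]) (ip : H -> H -> R[i]).

Definition is_inner_product : Prop :=
  [/\ (forall (a : R[i]) (x y z : H), ip (a *: x + y) z = a * ip x z + ip y z),
      (forall x y : H, ip y x = (ip x y)^*),
      (forall x : H, 0 <= ip x x) &
      (forall x : H, ip x x = 0 -> x = 0)].

Definition normsq (x : H) : R := complex.Re (ip x x).

Definition converges (u : nat -> H) (x : H) : Prop :=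
  forall eps : R, 0 < eps -> exists N : nat, forall n : nat, (N <= n)%N ->
    normsq (u n - x) < eps.

Definition cauchy_seq (u : nat -> H) : Prop :=
  forall eps : R, 0 < eps -> exists N : nat, forall m n : nat,
    (N <= m)%N -> (N <= n)%N -> normsq (u m - u n) < eps.

Definition is_hilbert : Prop :=
  is_inner_product /\
  forall u : nat -> H, cauchy_seq u -> exists x : H, converges u x.

Definition closure_set (A : set H) : set H :=
  [set x | exists u : nat -> H, (forall n, A (u n)) /\ converges u x].

Definition closed_set (A : set H) : Prop := closure_set A `<=` A.

End Hilbert.

Section Relations.
Variable (R : realType).
Local Notation C := R[i].

Definition linrel (A B : lmodType C) (T : set (A * B)) : Prop :=
  T (0, 0) /\
  forall (a : C) (p q : A * B), T p -> T q ->
    T (a *: p.1 + q.1, a *: p.2 + q.2).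

Definition rdom (A B : lmodType C) (T : set (A * B)) : set A :=
  [set f | exists g, T (f, g)].

Definition rmul (A B : lmodType C) (T : set (A * B)) : set B :=
  [set g | T (0, g)].

Definition radj (A B : lmodType C) (ipA : A -> A -> C) (ipB : B -> B -> C)
  (T : set (A * B)) : set (B * A) :=
  [set p | forall q, T q -> ipA p.2 q.1 = ipB p.1 q.2].

Definition rcomp (A B D : lmodType C) (Rr : set (B * D)) (T : set (A * B)) :
  set (A * D) :=
  [set p | exists g, T (p.1, g) /\ Rr (g, p.2)].

(* c + T = {{f, g + c f} : {f,g} in T}, c real *)
Definition rshift (A : lmodType C) (c : R) (T : set (A * A)) : set (A * A) :=
  [set p | T (p.1, p.2 - c%:C *: p.1)].

Definition rsum (A B : lmodType C) (T1 T2 : set (A * B)) : set (A * B) :=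
  [set p | exists p1 p2, T1 p1 /\ T2 p2 /\ p = (p1.1 + p2.1, p1.2 + p2.2)].

Definition symmetric_rel (A : lmodType C) (ip : A -> A -> C) (T : set (A * A)) :=
  T `<=` radj ip ip T.

Definition selfadjoint_rel (A : lmodType C) (ip : A -> A -> C) (T : set (A * A)) :=
  T = radj ip ip T.

Definition is_lb (A : lmodType C) (ip : A -> A -> C) (S : set (A * A)) (c : R) :=
  forall p, S p -> c%:C * ip p.1 p.1 <= ip p.2 p.1.

Definition semibounded_with (A : lmodType C) (ip : A -> A -> C)
  (S : set (A * A)) (gamma : R) : Prop :=
  (forall c, is_lb ip S c -> c <= gamma) /\
  (forall d, d < gamma -> exists c, is_lb ip S c /\ d < c).

Definition graph_on (A B : lmodType C) (D : set A) (Q : A -> B) : set (A * B) :=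
  [set p | D p.1 /\ p.2 = Q p.1].

(* Q is a representing map for t(S) - c: a linear operator with
   dom Q = dom S and t(S)[phi,psi] = c (phi,psi) + (Q phi, Q psi) *)
Definition representing_map (A B : lmodType C) (ipA : A -> A -> C)
  (ipB : B -> B -> C) (S : set (A * A)) (c : R) (Q : A -> B) : Prop :=
  (forall (a : C) (x y : A), rdom S x -> rdom S y ->
      Q (a *: x + y) = a *: Q x + Q y) /\
  (forall (phi phi' psi : A), S (phi, phi') -> rdom S psi ->
      ipA phi' psi = c%:C * ipA phi psi + ipB (Q phi) (Q psi)).

(* domain of the closure of the form t(S)[phi,psi] = (phi', psi):
   phi is in dom tbar(S) iff there is a sequence phi_n in dom S with
   phi_n -> phi and t(S)[phi_n - phi_m] -> 0 *)
Definition dom_form_closure (A : lmodType C) (ip : A -> A -> C)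
  (S : set (A * A)) : set A :=
  [set phi | exists u : nat -> A * A,
     (forall n, S (u n)) /\ converges ip (fun n => (u n).1) phi /\
     (forall eps : R, 0 < eps -> exists N : nat, forall m n : nat,
        (N <= m)%N -> (N <= n)%N ->
        `| ip ((u n).2 - (u m).2) ((u n).1 - (u m).1) | < eps%:C)].

(* Friedrichs extension S_F = c + Q^* Q^** *)
Definition friedrichs (A B : lmodType C) (ipA : A -> A -> C)
  (ipB : B -> B -> C) (S : set (A * A)) (c : R) (Q : A -> B) : set (A * A) :=
  let G := graph_on (rdom S) Q in
  rshift c (rcomp (radj ipA ipB G) (radj ipB ipA (radj ipA ipB G))).

(* weak Friedrichs extension S_f = c + Q^* Q *)
Definition weak_friedrichs (A B : lmodType C) (ipA : A -> A -> C)
  (ipB : B -> B -> C) (S : set (A * A)) (c : R) (Q : A -> B) : set (A * A) :=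
  let G := graph_on (rdom S) Q in
  rshift c (rcomp (radj ipA ipB G) G).

End Relations.

(* Main.v *)
Require Import Defs.
From HB Require Import structures.
From mathcomp Require Import all_boot all_order all_algebra.
From mathcomp Require Import complex.
From mathcomp Require Import boolp classical_sets reals.
From mathcomp Require Import ring lra.
Set Implicit Arguments. Unset Strict Implicit. Unset Printing Implicit Defensive.
Import Order.TTheory GRing.Theory Num.Theory.
Local Open Scope ring_scope.
Local Open Scope classical_set_scope.
Local Open Scope complex_scope.


Section IP.
Variables (R : realType) (V : lmodType R[i]) (ip : V -> V -> R[i]).
Hypothesis Hip : is_inner_product ip.

Lemma conjcD (a b : R[i]) : conjc (a + b) = conjc a + conjc b. Proof. exact: rmorphD. Qed.
Lemma conjcM (a b : R[i]) : conjc (a * b) = conjc a * conjc b. Proof. exact: rmorphM. Qed.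
Lemma conjcN (a : R[i]) : conjc (- a) = - conjc a. Proof. exact: rmorphN. Qed.
Lemma conjcB (a b : R[i]) : conjc (a - b) = conjc a - conjc b. Proof. exact: rmorphB. Qed.
Lemma conjcVf (a : R[i]) : conjc (a^-1) = (conjc a)^-1. Proof. exact: conjc_inv. Qed.

Lemma rCM (a b : R) : (a * b)%:C = a%:C * b%:C :> R[i]. Proof. exact: rmorphM. Qed.
Lemma rCD (a b : R) : (a + b)%:C = a%:C + b%:C :> R[i]. Proof. exact: rmorphD. Qed.
Lemma rCN (a : R) : (- a)%:C = - a%:C :> R[i]. Proof. exact: rmorphN. Qed.
Lemma rCB (a b : R) : (a - b)%:C = a%:C - b%:C :> R[i]. Proof. exact: rmorphB. Qed.
Lemma rCX (a : R) n : (a ^+ n)%:C = a%:C ^+ n :> R[i]. Proof. exact: rmorphXn. Qed.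
Lemma rCn n : (n%:R : R)%:C = n%:R :> R[i]. Proof. exact: rmorph_nat. Qed.
Lemma rC0 : (0 : R)%:C = 0 :> R[i]. Proof. by []. Qed.
Lemma rC1 : (1 : R)%:C = 1 :> R[i]. Proof. by []. Qed.

Lemma ipDZl a x y z : ip (a *: x + y) z = a * ip x z + ip y z.
Proof. by case: Hip. Qed.
Lemma ipC x y : ip y x = (ip x y)^*.
Proof. by case: Hip. Qed.
Lemma ipxx_ge0 x : 0 <= ip x x.
Proof. by case: Hip. Qed.
Lemma ipxx_eq0 x : ip x x = 0 -> x = 0.
Proof. by case: Hip => _ _ _; apply. Qed.

Lemma ip0l z : ip 0 z = 0.
Proof.
have := ipDZl 1 0 0 z; rewrite scale1r addr0 mul1r => h.
by apply: (addrI (ip 0 z)); rewrite addr0 -h.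
Qed.
Lemma ipDl x y z : ip (x + y) z = ip x z + ip y z.
Proof. by rewrite -[x]scale1r ipDZl mul1r scale1r. Qed.
Lemma ipZl a x z : ip (a *: x) z = a * ip x z.
Proof. by rewrite -[a *: x]addr0 ipDZl ip0l addr0. Qed.
Lemma ipNl x z : ip (- x) z = - ip x z.
Proof. by rewrite -scaleN1r ipZl mulN1r. Qed.
Lemma ipBl x y z : ip (x - y) z = ip x z - ip y z.
Proof. by rewrite ipDl ipNl. Qed.
Lemma ip0r z : ip z 0 = 0.
Proof. by rewrite ipC ip0l conjc0. Qed.
Lemma ipDr x y z : ip z (x + y) = ip z x + ip z y.
Proof. by rewrite ipC ipDl conjcD -!ipC. Qed.
Lemma ipZr a x z : ip z (a *: x) = conjc a * ip z x.
Proof. by rewrite ipC ipZl conjcM -ipC. Qed.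
Lemma ipNr x z : ip z (- x) = - ip z x.
Proof. by rewrite ipC ipNl conjcN -ipC. Qed.
Lemma ipBr x y z : ip z (x - y) = ip z x - ip z y.
Proof. by rewrite ipDr ipNr. Qed.
Lemma ipZr_real (c : R) x z : ip z (c%:C *: x) = c%:C * ip z x.
Proof. by rewrite ipZr conjc_real. Qed.

Lemma ipxx_conj x : conjc (ip x x) = ip x x.
Proof. by rewrite -ipC. Qed.

Lemma real_of_ge0 (z : R[i]) : 0 <= z -> z = (complex.Re z)%:C.
Proof. move=> /ger0_Im; case: z => a b /= ->; done. Qed.

Definition nrm x : R := Num.sqrt (normsq ip x).

Lemma normsq_ge0 x : 0 <= normsq ip x.
Proof. by have := ipxx_ge0 x; rewrite {1}(real_of_ge0 (ipxx_ge0 x)) ler0c. Qed.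

Lemma ipxxE x : ip x x = (normsq ip x)%:C.
Proof. exact: real_of_ge0 (ipxx_ge0 x). Qed.

Lemma nrm_ge0 x : 0 <= nrm x. Proof. exact: sqrtr_ge0. Qed.
Lemma nrm_sq x : nrm x ^+ 2 = normsq ip x.
Proof. by rewrite sqr_sqrtr // normsq_ge0. Qed.
Lemma ipxxE2 x : ip x x = (nrm x ^+ 2)%:C.
Proof. by rewrite nrm_sq ipxxE. Qed.

Lemma normsq_eq0 x : normsq ip x = 0 -> x = 0.
Proof. by move=> h; apply: ipxx_eq0; rewrite ipxxE h. Qed.

Lemma nrm_eq0 x : nrm x = 0 -> x = 0.
Proof. by move=> h; apply: normsq_eq0; rewrite -nrm_sq h expr0n. Qed.

Lemma nrm0 : nrm 0 = 0.
Proof. by rewrite /nrm /normsq ip0l /= sqrtr0. Qed.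

Lemma normsqN x : normsq ip (- x) = normsq ip x.
Proof. by rewrite /normsq ipNl ipNr opprK. Qed.
Lemma nrmN x : nrm (- x) = nrm x.
Proof. by rewrite /nrm normsqN. Qed.
Lemma nrmB x y : nrm (x - y) = nrm (y - x).
Proof. by rewrite -nrmN opprB. Qed.

Lemma normsqZ (a : R[i]) x : (normsq ip (a *: x))%:C = `|a| ^+ 2 * (normsq ip x)%:C.
Proof. by rewrite -!ipxxE ipZl ipZr mulrA normCK mulrC. Qed.

Lemma ip_proj_expand w y : ip y y != 0 ->
  ip (w - (ip w y / ip y y) *: y) (w - (ip w y / ip y y) *: y) =
  ip w w - ip w y * conjc (ip w y) / ip y y.
Proof.
move=> hb.
rewrite ipBl !ipBr !ipZl !ipZr conjcM conjcVf ipxx_conj.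
rewrite [ip y w]ipC.
set a := ip w y; set b := ip y y; set ww := ip w w.
by field.
Qed.

Lemma CS x y : `|ip x y| ^+ 2 <= ip x x * ip y y.
Proof.
have [->|hy] := eqVneq y 0.
  by rewrite !ip0r normr0 expr0n mulr0.
have hb : ip y y != 0 by apply/eqP=> /ipxx_eq0 /eqP; rewrite (negbTE hy).
have hbp : 0 < ip y y by rewrite lt_def hb ipxx_ge0.
have := ipxx_ge0 (x - (ip x y / ip y y) *: y).
rewrite ip_proj_expand // subr_ge0 ler_pdivrMr // => h.
by rewrite normCK.
Qed.

Lemma cs_nrm x y : `|ip x y| <= (nrm x * nrm y)%:C.
Proof.
rewrite -(ler_pXn2r (_ : (0 < 2)%N)) //; last 2 first.
- by rewrite qualifE /= normr_ge0.
- by rewrite qualifE /= ler0c mulr_ge0 // nrm_ge0.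
by rewrite rCM exprMn -(rCX (nrm x)) -(rCX (nrm y)) -!ipxxE2 CS.
Qed.

Lemma Re_le_norm (z : R[i]) : (complex.Re z)%:C <= `|z|.
Proof.
case: z => a b; rewrite normc_def /= lecR.
have h : `|a| <= Num.sqrt (a ^+ 2 + b ^+ 2).
  by rewrite -sqrtr_sqr ler_sqrt ?addr_ge0 ?sqr_ge0 // lerDl sqr_ge0.
exact: le_trans (ler_norm a) h.
Qed.

Lemma ReD (a b : R[i]) : complex.Re (a + b) = complex.Re a + complex.Re b.
Proof. by case: a; case: b. Qed.
Lemma ReJ (a : R[i]) : complex.Re (conjc a) = complex.Re a.
Proof. by case: a. Qed.

Lemma Re_ip_le x y : complex.Re (ip x y) <= nrm x * nrm y.
Proof. by rewrite -lecR; exact: le_trans (Re_le_norm _) (cs_nrm x y). Qed.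

Lemma nrm_triangle x y : nrm (x + y) <= nrm x + nrm y.
Proof.
rewrite -(ler_pXn2r (_ : (0 < 2)%N)) ?qualifE /= ?nrm_ge0 ?addr_ge0 ?nrm_ge0 //.
rewrite nrm_sq /normsq ipDl !ipDr !ReD [ip y x]ipC ReJ.
have := Re_ip_le x y; have := nrm_sq x; have := nrm_sq y; rewrite /normsq.
move=> <- <-; lra.
Qed.

Lemma nrm_triangleB x y z : nrm (x - z) <= nrm (x - y) + nrm (y - z).
Proof. by have := nrm_triangle (x - y) (y - z); rewrite addrA subrK. Qed.

Lemma nrmZ (a : R[i]) x : (nrm (a *: x))%:C = `|a| * (nrm x)%:C.
Proof.
have h1 : (nrm (a *: x))%:C \in Num.nneg by rewrite nnegrE ler0c nrm_ge0.
have h2 : `|a| * (nrm x)%:C \in Num.nneg by rewrite nnegrE mulr_ge0 ?normr_ge0 // ler0c nrm_ge0.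
apply: (@pexpIrn _ 2 isT _ _ h1 h2) => /=.
by rewrite exprMn -(rCX (nrm x)) -(rCX (nrm _)) !nrm_sq normsqZ.
Qed.

Lemma nrm_real_scale (r : R) x : nrm (r%:C *: x) = `|r| * nrm x.
Proof.
apply: complexI; rewrite nrmZ rCM; congr (_ * _).
by rewrite normc_def /= expr0n addr0 sqrtr_sqr.
Qed.

Lemma lt_sq_nrm x e : 0 < e -> (nrm x < e) = (normsq ip x < e ^+ 2).
Proof.
move=> e0; rewrite -nrm_sq ltr_pXn2r // qualifE /= ?nrm_ge0 ?ltW //.
Qed.

Lemma convP u x : converges ip u x <->
  (forall e, 0 < e -> exists N, forall n, (N <= n)%N -> nrm (u n - x) < e).
Proof.
split=> h e e0.
  have [N hN] := h _ (exprn_gt0 2 e0).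
  by exists N => n hn; rewrite lt_sq_nrm // hN.
have e0' : 0 < Num.sqrt e by rewrite sqrtr_gt0.
have [N hN] := h _ e0'; exists N => n /hN.
by rewrite lt_sq_nrm // sqr_sqrtr // ltW.
Qed.

Lemma cauchyP u : cauchy_seq ip u <->
  (forall e, 0 < e -> exists N, forall m n, (N <= m)%N -> (N <= n)%N -> nrm (u m - u n) < e).
Proof.
split=> h e e0.
  have [N hN] := h _ (exprn_gt0 2 e0).
  by exists N => m n hm hn; rewrite lt_sq_nrm // hN.
have e0' : 0 < Num.sqrt e by rewrite sqrtr_gt0.
have [N hN] := h _ e0'; exists N => m n hm /(hN m n hm).
by rewrite lt_sq_nrm // sqr_sqrtr // ltW.
Qed.

End IP.


Section Reals.
Variable R : realType.

Definition invS (n : nat) : R := (n.+1%:R)^-1.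

Lemma archi_inv (e : R) : 0 < e -> exists N : nat, invS N < e.
Proof.
rewrite /invS.
move=> e0; exists (Num.Def.archi_bound (e^-1)).
have h0 : 0 <= e^-1 by rewrite invr_ge0 ltW.
have h := @archi_boundP _ (e^-1) h0.
rewrite invf_plt ?posrE ?ltr0Sn //.
apply: lt_le_trans h _; by rewrite ler_nat.
Qed.

Lemma inv_mono N n : (N <= n)%N -> invS n <= invS N.
Proof. by move=> h; rewrite /invS; rewrite lef_pV2 ?posrE ?ltr0Sn // ler_nat. Qed.

Lemma inv_gt0 n : 0 < invS n.
Proof. by rewrite /invS invr_gt0 ltr0Sn. Qed.

Lemma small_eq0 (r : R) : 0 <= r -> (forall e, 0 < e -> r < e) -> r = 0.
Proof.
move=> r0 h; apply/eqP; rewrite eq_le r0 andbT; rewrite leNgt; apply/negP => rp.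
by have := h r rp; rewrite ltxx.
Qed.

Lemma small_le (a b : R) : (forall e, 0 < e -> a < b + e) -> a <= b.
Proof.
move=> h; rewrite leNgt; apply/negP => hab.
have := h (a - b); rewrite subr_gt0 => /(_ hab); lra.
Qed.

Lemma small_norm_eq0 (z : R[i]) : (forall e : R, 0 < e -> `|z| < e%:C) -> z = 0.
Proof.
move=> h; have /complex_realP [k hk] := normr_real z.
have k0 : 0 <= k by rewrite -lecR -hk normr_ge0.
suff k00 : k = 0 by apply: normr0_eq0; rewrite hk k00.
by apply: small_eq0 => // e e0; rewrite -ltcR -hk h.
Qed.

Lemma normc_ge0 (a : R[i]) : 0 <= Normc.normc a.
Proof. by case: a => ? ?; exact: sqrtr_ge0. Qed.

Definition ccv (a : nat -> R[i]) (l : R[i]) :=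
  forall e : R, 0 < e -> exists N, forall n, (N <= n)%N -> `|a n - l| < e%:C.

Lemma ccv_uniq a l1 l2 : ccv a l1 -> ccv a l2 -> l1 = l2.
Proof.
move=> h1 h2; apply/eqP; rewrite -subr_eq0; apply/eqP; apply: small_norm_eq0 => e e0.
have e2 : 0 < e / 2 by rewrite divr_gt0.
have [N1 hN1] := h1 _ e2; have [N2 hN2] := h2 _ e2.
have hn1 := hN1 (maxn N1 N2) (leq_maxl _ _).
have hn2 := hN2 (maxn N1 N2) (leq_maxr _ _).
have -> : l1 - l2 = (a (maxn N1 N2) - l2) - (a (maxn N1 N2) - l1) by ring.
apply: le_lt_trans (ler_normB _ _) _.
have -> : e = e / 2 + e / 2 by field.
by rewrite rCD ltrD.
Qed.

Lemma ccv_ext a b l1 l2 : ccv a l1 -> ccv b l2 -> (forall n, a n = b n) -> l1 = l2.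
Proof.
move=> h1 h2 hab; have eab : a = b by apply: funext.
by subst b; exact: ccv_uniq h1 h2.
Qed.

Lemma ccv_const l : ccv (fun _ => l) l.
Proof. by move=> e e0; exists 0%N => n _; rewrite subrr normr0 ltcR. Qed.

Lemma ccv_conj a l : ccv a l -> ccv (fun n => conjc (a n)) (conjc l).
Proof.
move=> h e e0; have [N hN] := h e e0; exists N => n /hN.
by rewrite -conjcB normcJ.
Qed.

Lemma inv_le1 n : invS n <= 1.
Proof. by rewrite /invS invf_le1 ?ltr0Sn // ler1n. Qed.

End Reals.

Section Conv.
Variables (R : realType) (V : lmodType R[i]) (ip : V -> V -> R[i]).
Hypothesis Hip : is_inner_product ip.

Lemma nrmZr a z : nrm ip (a *: z) = Normc.normc a * nrm ip z.
Proof. by apply: complexI; rewrite nrmZ // rCM. Qed.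

Lemma ccv_ipr u x a : converges ip u x -> ccv (fun n => ip a (u n)) (ip a x).
Proof.
move=> /(convP Hip) h e e0.
have ha : 0 < nrm ip a + 1 by have := nrm_ge0 ip a; lra.
have [N hN] := h (e / (nrm ip a + 1)) (divr_gt0 e0 ha).
exists N => n /hN hn.
rewrite -ipBr //; apply: le_lt_trans (cs_nrm Hip _ _) _; rewrite ltcR.
have hd := nrm_ge0 ip (u n - x); have h0 := nrm_ge0 ip a.
move: hn; rewrite ltr_pdivlMr // => hn.
apply: le_lt_trans hn; rewrite mulrDr mulr1 [X in X <= _]mulrC; lra.
Qed.

Lemma ccv_ipl u x a : converges ip u x -> ccv (fun n => ip (u n) a) (ip x a).
Proof.
move=> /(ccv_ipr a) /ccv_conj h.
have e : (fun n => ip (u n) a) = (fun n => conjc (ip a (u n))) by apply: funext => n; rewrite ipC.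
by rewrite e [ip x a]ipC.
Qed.

Lemma conv_uniq u x y : converges ip u x -> converges ip u y -> x = y.
Proof.
move=> /(convP Hip) h1 /(convP Hip) h2; apply/eqP; rewrite -subr_eq0; apply/eqP.
apply: (nrm_eq0 Hip); apply: small_eq0; first exact: nrm_ge0.
move=> e e0; have e2 : 0 < e / 2 by rewrite divr_gt0.
have [N1 hN1] := h1 _ e2; have [N2 hN2] := h2 _ e2.
have hn1 := hN1 (maxn N1 N2) (leq_maxl _ _).
have hn2 := hN2 (maxn N1 N2) (leq_maxr _ _).
apply: le_lt_trans (nrm_triangleB Hip _ (u (maxn N1 N2)) _) _.
rewrite nrmB //; lra.
Qed.

Lemma conv_lin (a : R[i]) u w x y : converges ip u x -> converges ip w y ->
  converges ip (fun n => a *: u n + w n) (a *: x + y).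
Proof.
move=> /(convP Hip) h1 /(convP Hip) h2; apply/(convP Hip) => e e0.
have ha : 0 < Normc.normc a + 1.
  by have := normc_ge0 a; lra.
have e2 : 0 < e / 2 / (Normc.normc a + 1) by rewrite !divr_gt0.
have e2' : 0 < e / 2 by rewrite divr_gt0.
have [N1 hN1] := h1 _ e2; have [N2 hN2] := h2 _ e2'.
exists (maxn N1 N2) => n hn.
have hn1 := hN1 n (leq_trans (leq_maxl _ _) hn).
have hn2 := hN2 n (leq_trans (leq_maxr _ _) hn).
have -> : a *: u n + w n - (a *: x + y) = a *: (u n - x) + (w n - y).
  by rewrite scalerBr opprD addrACA.
apply: le_lt_trans (nrm_triangle Hip _ _) _.
rewrite nrmZr.
move: hn1; rewrite ltr_pdivlMr // => hn1.
have := normc_ge0 a; have := nrm_ge0 ip (u n - x) => h3 h4.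
have : Normc.normc a * nrm ip (u n - x) <= nrm ip (u n - x) * (Normc.normc a + 1).
  rewrite mulrDr mulr1 mulrC; lra.
lra.
Qed.

Lemma conv_const x : converges ip (fun _ => x) x.
Proof. by apply/(convP Hip) => e e0; exists 0%N => n _; rewrite subrr nrm0. Qed.

Lemma conv_cauchy u x : converges ip u x -> cauchy_seq ip u.
Proof.
move=> /(convP Hip) h; apply/(cauchyP Hip) => e e0.
have e2 : 0 < e / 2 by rewrite divr_gt0.
have [N hN] := h _ e2; exists N => m n hm hn.
apply: le_lt_trans (nrm_triangleB Hip _ x _) _.
have := hN m hm; have := hN n hn; rewrite [nrm ip (x - u n)]nrmB //; lra.
Qed.

Lemma closure_sub (A : set V) : A `<=` closure_set ip A.
Proof. by move=> x hx; exists (fun _ => x); split => //; exact: conv_const. Qed.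

Lemma closure_orth (A : set V) x z :
  closure_set ip A x -> (forall y, A y -> ip y z = 0) -> ip x z = 0.
Proof.
move=> [u [hu hc]] h.
apply: (ccv_ext (ccv_ipl z hc) (ccv_const 0)) => n; exact: h.
Qed.

Lemma nrm_dist_cont x u w : converges ip u w ->
  forall e, 0 < e -> exists N, forall n, (N <= n)%N ->
    nrm ip (x - w) - e < nrm ip (x - u n) /\ nrm ip (x - u n) < nrm ip (x - w) + e.
Proof.
move=> /(convP Hip) h e e0; have [N hN] := h e e0; exists N => n /hN hn.
have t1 := nrm_triangleB Hip x (u n) w.
have t2 := nrm_triangleB Hip x w (u n).
rewrite [nrm ip (w - u n)]nrmB // in t2; split; lra.
Qed.

End Conv.


Section Proj.
Variables (R : realType) (V : lmodType R[i]) (ip : V -> V -> R[i]).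
Hypothesis Hh : is_hilbert ip.
Let Hip : is_inner_product ip := proj1 Hh.

Lemma para a b : nrm ip (a + b) ^+ 2 + nrm ip (a - b) ^+ 2 =
  2 * nrm ip a ^+ 2 + 2 * nrm ip b ^+ 2.
Proof.
apply: complexI; rewrite !rCD !(rCM 2) -!(ipxxE2 Hip) rCn.
rewrite !(ipDl Hip) !(ipDr Hip) !(ipNl Hip) !(ipNr Hip); ring.
Qed.

Lemma proj_exists (M : set V) : M 0 ->
  (forall a x y, M x -> M y -> M (a *: x + y)) ->
  forall x, exists2 m, closure_set ip M m & forall y, M y -> ip (x - m) y = 0.
Proof.
move=> M0 Mlin x.
have MZ : forall a y, M y -> M (a *: y) by move=> a y hy; have := Mlin a y 0 hy M0; rewrite addr0.
have MD : forall y z, M y -> M z -> M (y + z) by move=> y z hy hz; have := Mlin 1 y z hy hz; rewrite scale1r.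
pose E := [set r | exists y, M y /\ r = nrm ip (x - y)].
have E0 : E (nrm ip x) by exists 0; rewrite subr0.
have Elb : has_lbound E by exists 0 => r [y [_ ->]]; exact: nrm_ge0.
have Einf : has_inf E by split => //; exists (nrm ip x).
set d := inf E.
have hd : forall y, M y -> d <= nrm ip (x - y).
  by move=> y hy; apply: (ge_inf Elb); exists y.
have d0 : 0 <= d by apply: lb_le_inf; [exists (nrm ip x) | move=> r [y [_ ->]]; exact: nrm_ge0].
have hseq : forall n, exists y, M y /\ nrm ip (x - y) < d + invS R n.
  move=> n; have [r [y [hy ->]] hr] := inf_adherent (inv_gt0 R n) Einf; by exists y.
have [f hf] := choice hseq.
have key : forall m n, nrm ip (f m - f n) ^+ 2 <=
    2 * (2 * d + 1) * (invS R m + invS R n).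
  move=> m n.
  have [hm1 hm2] := hf m; have [hn1 hn2] := hf n.
  pose mid := (2 : R[i])^-1 *: (f m + f n).
  have hmid : d <= nrm ip (x - mid) by apply: hd; apply: MZ; apply: MD.
  have e1 : (x - f m) + (x - f n) = (2 : R)%:C *: (x - mid).
    rewrite /mid scalerBr scalerA rCn mulfV ?scale1r; last by rewrite pnatr_eq0.
    by rewrite scaler_nat mulr2n opprD addrACA.
  have e2 : f m - f n = (x - f n) - (x - f m) by rewrite [RHS]addrC opprB addrA subrK.
  have := para (x - f m) (x - f n).
  rewrite e1 (nrm_real_scale Hip) [nrm ip (_ - (x - f n))](nrmB Hip) -e2.
  have ha := nrm_ge0 ip (x - f m); have hb := nrm_ge0 ip (x - f n).
  have im0 := inv_gt0 R m; have in0 := inv_gt0 R n.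
  have im1 := inv_le1 R m; have in1 := inv_le1 R n.
  have h2 : `|2 : R| = 2 by rewrite ger0_norm.
  rewrite h2.
  set im := invS R m in im0 im1 hm2 *; set iN := invS R n in in0 in1 hn2 *.
  set A := nrm ip (x - f m) in ha hm2 *; set B := nrm ip (x - f n) in hb hn2 *.
  set Mi := nrm ip (x - mid) in hmid *.
  clearbody im iN A B Mi.
  have hA : A ^+ 2 <= d ^+ 2 + (2 * d + 1) * im.
    have hh1 : A * A <= (d + im) * (d + im) by apply: ler_pM => //; lra.
    have hh2 : im * im <= im * 1 by apply: ler_pM => //; lra.
    rewrite expr2; lra.
  have hB : B ^+ 2 <= d ^+ 2 + (2 * d + 1) * iN.
    have hh3 : B * B <= (d + iN) * (d + iN) by apply: ler_pM => //; lra.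
    have hh4 : iN * iN <= iN * 1 by apply: ler_pM => //; lra.
    rewrite expr2; lra.
  have hM : d ^+ 2 <= Mi ^+ 2 by rewrite !expr2; apply: ler_pM.
  move=> hp; rewrite !expr2 in hA hB hM hp *; lra.
have cf : cauchy_seq ip f.
  apply/(cauchyP Hip) => e e0.
  have hc : 0 < e ^+ 2 / (4 * (2 * d + 1)) by rewrite divr_gt0 ?exprn_gt0 //; lra.
  have [N hN] := archi_inv hc.
  exists N => m n hm hn.
  rewrite (lt_sq_nrm Hip) // -(nrm_sq Hip).
  apply: le_lt_trans (key m n) _.
  have i1 := inv_mono R hm; have i2 := inv_mono R hn; have i0 := inv_gt0 R N.
  move: hN; rewrite ltr_pdivlMr; last lra. move=> hN.
  have : (2 * d + 1) * (invS R m + invS R n) <= (2 * d + 1) * (invS R N + invS R N).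
    by apply: ler_wpM2l; [lra | exact: lerD].
  nra.
have [mlim hlim] := Hh.2 f cf.
exists mlim; first by exists f; split => // n; exact: (hf n).1.
move=> y hy.
set w := x - mlim.
have lowb : forall t : R[i], d <= nrm ip (w - t *: y).
  move=> t.
  have hc := conv_lin Hip t (conv_const Hip y) hlim.
  apply: small_le => e e0.
  have [N hN] := nrm_dist_cont Hip x hc e0.
  have [_ h2] := hN N (leqnn N).
  have := hd _ (Mlin t y (f N) hy (hf N).1).
  have -> : w - t *: y = x - (t *: y + mlim) by rewrite /w opprD addrA addrAC.
  lra.
have upb : nrm ip w <= d.
  apply: small_le => e e0.
  have e2 : 0 < e / 2 by rewrite divr_gt0.
  have [N hN] := nrm_dist_cont Hip x hlim e2.
  have [N' hN'] := archi_inv e2.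
  have [h1 _] := hN (maxn N N') (leq_maxl _ _).
  have := (hf (maxn N N')).2.
  have := inv_mono R (leq_maxr N N').
  rewrite /w; lra.
have [->|hy0] := eqVneq y 0; first by rewrite (ip0r Hip).
have hb : ip y y != 0 by apply/eqP=> /(ipxx_eq0 Hip) /eqP; rewrite (negbTE hy0).
have hbp : 0 < ip y y by rewrite lt_def hb (ipxx_ge0 Hip).
have hl := lowb (ip w y / ip y y).
have hle : ip w w <= ip (w - (ip w y / ip y y) *: y) (w - (ip w y / ip y y) *: y).
  rewrite [ip w w](ipxxE2 Hip) [ip (w - _) _](ipxxE2 Hip) lecR.
  have h := le_trans upb hl; rewrite !expr2; apply: ler_pM; [exact: nrm_ge0 | exact: nrm_ge0 | exact: h | exact: h].
rewrite (ip_proj_expand Hip) // in hle.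
have hz : ip w y * conjc (ip w y) / ip y y <= 0.
  by move: hle; rewrite -subr_ge0 addrAC subrr add0r oppr_ge0.
have hz0 : 0 <= ip w y * conjc (ip w y) / ip y y.
  by apply: divr_ge0; [exact: mulcJ_ge0 | exact: ltW].
have : ip w y * conjc (ip w y) / ip y y = 0 by apply/eqP; rewrite eq_le hz hz0.
move/eqP; rewrite mulf_eq0 invr_eq0 (negbTE hb) orbF -normCK expf_eq0 /= normr_eq0.
by move/eqP.
Qed.

Lemma perpperp (M : set V) : M 0 ->
  (forall a x y, M x -> M y -> M (a *: x + y)) ->
  forall x, (forall z, (forall y, M y -> ip z y = 0) -> ip x z = 0) ->
  closure_set ip M x.
Proof.
move=> M0 Mlin x hx.
have [m hm horth] := proj_exists M0 Mlin x.
have h1 : ip x (x - m) = 0 by apply: hx => y hy; rewrite horth.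
have h2 : ip m (x - m) = 0.
  apply: (closure_orth Hip hm) => y hy.
  by rewrite (ipC Hip) horth //; apply/eqP; rewrite conjc_eq0.
have : ip (x - m) (x - m) = 0 by rewrite (ipBl Hip) h1 h2 subrr.
move/(ipxx_eq0 Hip)/eqP; rewrite subr_eq0 => /eqP ->; exact: hm.
Qed.

End Proj.


Section Prod.
Variables (R : realType) (H K : lmodType R[i]).
Variables (ipH : H -> H -> R[i]) (ipK : K -> K -> R[i]).

Definition ipP (x y : H * K) : R[i] := ipH x.1 y.1 + ipK x.2 y.2.

Lemma ipP_inner : is_inner_product ipH -> is_inner_product ipK -> is_inner_product ipP.
Proof.
move=> hH hK; split.
- move=> a x y z; rewrite /ipP /= (ipDZl hH) (ipDZl hK); ring.
- by move=> x y; rewrite /ipP conjcD -!(ipC hH) -!(ipC hK).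
- by move=> x; rewrite /ipP addr_ge0 // ipxx_ge0.
- move=> [x1 x2] /eqP; rewrite /ipP /= paddr_eq0 ?(ipxx_ge0 hH) ?(ipxx_ge0 hK) //.
  by case/andP => /eqP /(ipxx_eq0 hH) -> /eqP /(ipxx_eq0 hK) ->.
Qed.

Lemma normsqP z : normsq ipP z = normsq ipH z.1 + normsq ipK z.2.
Proof. by rewrite /normsq /ipP ReD. Qed.

Hypotheses (hH : is_inner_product ipH) (hK : is_inner_product ipK).

Lemma convP_prod w x y : converges ipP w (x, y) <->
  converges ipH (fun n => (w n).1) x /\ converges ipK (fun n => (w n).2) y.
Proof.
split.
  move=> h; split=> e e0; have [N hN] := h e e0; exists N => n /hN;
  rewrite normsqP /=; have := normsq_ge0 hH ((w n).1 - x); have := normsq_ge0 hK ((w n).2 - y); lra.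
move=> [h1 h2] e e0.
have e2 : 0 < e / 2 by rewrite divr_gt0.
have [N1 hN1] := h1 _ e2; have [N2 hN2] := h2 _ e2.
exists (maxn N1 N2) => n hn; rewrite normsqP /=.
have := hN1 n (leq_trans (leq_maxl _ _) hn); have := hN2 n (leq_trans (leq_maxr _ _) hn); lra.
Qed.

Lemma prod_hilbert : is_hilbert ipH -> is_hilbert ipK -> is_hilbert ipP.
Proof.
move=> [_ cH] [_ cK]; split; first exact: ipP_inner.
move=> w cw.
have c1 : cauchy_seq ipH (fun n => (w n).1).
  move=> e e0; have [N hN] := cw e e0; exists N => m n hm hn.
  have := hN m n hm hn; rewrite normsqP /=.
  have := normsq_ge0 hK ((w m).2 - (w n).2); lra.
have c2 : cauchy_seq ipK (fun n => (w n).2).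
  move=> e e0; have [N hN] := cw e e0; exists N => m n hm hn.
  have := hN m n hm hn; rewrite normsqP /=.
  have := normsq_ge0 hH ((w m).1 - (w n).1); lra.
have [x hx] := cH _ c1; have [y hy] := cK _ c2.
by exists (x, y); apply/convP_prod.
Qed.

End Prod.


Section Adj.
Variables (R : realType) (A B : lmodType R[i]).
Variables (ipA : A -> A -> R[i]) (ipB : B -> B -> R[i]).
Hypotheses (hA : is_inner_product ipA) (hB : is_inner_product ipB).

Lemma radjB (T : set (A * B)) p q : radj ipA ipB T p -> radj ipA ipB T q ->
  radj ipA ipB T (p.1 - q.1, p.2 - q.2).
Proof. by move=> hp hq t ht /=; rewrite (ipBl hA) (ipBl hB) hp // hq. Qed.

Lemma radj_lin (T : set (A * B)) : linrel (radj ipA ipB T).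
Proof.
split; first by move=> t _ /=; rewrite (ip0l hA) (ip0l hB).
move=> a p q hp hq t ht /=; by rewrite (ipDZl hA) (ipDZl hB) hp // hq.
Qed.

Lemma radjD (T : set (A * B)) p q : radj ipA ipB T p -> radj ipA ipB T q ->
  radj ipA ipB T (p.1 + q.1, p.2 + q.2).
Proof. by move=> hp hq t ht /=; rewrite (ipDl hA) (ipDl hB) hp // hq. Qed.

End Adj.

Lemma linB (R : realType) (A B : lmodType R[i]) (T : set (A * B)) p q :
  linrel T -> T p -> T q -> T (p.1 - q.1, p.2 - q.2).
Proof.
move=> [_ hl] hp hq; have := hl (-1) q p hq hp.
by rewrite !scaleN1r ![- _ + _]addrC.
Qed.

Lemma zmA (V : zmodType) (h f a : V) : h - f + a - (a - f) = h.
Proof. by rewrite opprB addrACA subrK subrr addr0. Qed.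

Lemma zmB (V : zmodType) (a b x y : V) : b - x = a - y -> a - b = y - x.
Proof.
move=> e; apply/eqP; rewrite -subr_eq0; apply/eqP.
have -> : a - b - (y - x) = (a - y) - (b - x).
  by rewrite !opprB addrACA [- b + _]addrC -addrACA.
by rewrite e subrr.
Qed.

Section RealAux.
Variable R : realType.

Lemma normC_real (x : R) : `|x%:C| = (`|x|)%:C.
Proof. by rewrite normc_def /= expr0n addr0 sqrtr_sqr. Qed.

Lemma real_bound (c s r e : R) : 0 <= s -> 0 <= r ->
  s < e / 2 / (`|c| + 1) -> r < e / 2 -> `|c * s + r| < e.
Proof.
move=> s0 r0 hs hr.
have hc : 0 < `|c| + 1 by have := normr_ge0 c; lra.
rewrite ltr_pdivlMr // in hs.
have h1 : `|c * s + r| <= `|c| * s + r.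
  by apply: le_trans (ler_normD _ _) _; rewrite normrM (ger0_norm s0) (ger0_norm r0).
have h2 : `|c| * s <= s * (`|c| + 1) by rewrite mulrDr mulr1 mulrC; lra.
lra.
Qed.

Lemma real_bound2 (c s r e : R) : 0 <= s -> 0 <= r ->
  s < e / 2 / (`|c| + 1) -> `|c * s + r| < e / 2 -> r < e.
Proof.
move=> s0 r0 hs hr.
have hc : 0 < `|c| + 1 by have := normr_ge0 c; lra.
rewrite ltr_pdivlMr // in hs.
have a1 := ler_norm (c * s + r).
have a2 := ler_norm (- (c * s)).
rewrite normrN normrM (ger0_norm s0) in a2.
have h2 : `|c| * s <= s * (`|c| + 1) by rewrite mulrDr mulr1 mulrC; lra.
lra.
Qed.

End RealAux.

Section Main.
Variables (R : realType) (H K : lmodType R[i]).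
Variables (ipH : H -> H -> R[i]) (ipK : K -> K -> R[i]).
Variables (S : set (H * H)) (c : R) (Q : H -> K).
Hypotheses (hHh : is_hilbert ipH) (hKh : is_hilbert ipK).
Hypotheses (linS : linrel S) (rep : representing_map ipH ipK S c Q).
Let hH : is_inner_product ipH := proj1 hHh.
Let hK : is_inner_product ipK := proj1 hKh.

Local Notation G := (graph_on (rdom S) Q).
Local Notation Qs := (radj ipH ipK G).
Local Notation Qss := (radj ipK ipH Qs).
Local Notation SF := (Defs.rshift c (rcomp Qs Qss)).
Local Notation Sf := (Defs.rshift c (rcomp Qs G)).
Local Notation Sa := (radj ipH ipH S).

Lemma S0 : S (0, 0). Proof. by case: linS. Qed.
Lemma SB p q : S p -> S q -> S (p.1 - q.1, p.2 - q.2).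
Proof.
move=> hp hq; case: linS => _ /(_ (-1) q p hq hp).
by rewrite !scaleN1r ![- _ + _]addrC.
Qed.
Lemma dom0 : rdom S 0. Proof. by exists 0; exact: S0. Qed.
Lemma domB x y : rdom S x -> rdom S y -> rdom S (x - y).
Proof. by move=> [x' hx] [y' hy]; exists (x' - y'); exact: (SB hx hy). Qed.
Lemma domL a x y : rdom S x -> rdom S y -> rdom S (a *: x + y).
Proof. by move=> [x' hx] [y' hy]; case: linS => _ /(_ a _ _ hx hy) /= h; eexists; exact: h. Qed.

Lemma QL a x y : rdom S x -> rdom S y -> Q (a *: x + y) = a *: Q x + Q y.
Proof. by case: rep => h _; exact: h. Qed.
Lemma Q0 : Q 0 = 0.
Proof.
have := QL 1 dom0 dom0; rewrite !scale1r addr0 => h.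
by apply: (addrI (Q 0)); rewrite addr0 -h.
Qed.
Lemma QB x y : rdom S x -> rdom S y -> Q (x - y) = Q x - Q y.
Proof.
move=> hx hy; have := QL (-1) hy hx.
by rewrite !scaleN1r addrC [- Q y + _]addrC.
Qed.
Lemma Qrep phi phi' psi : S (phi, phi') -> rdom S psi ->
  ipH phi' psi = c%:C * ipH phi psi + ipK (Q phi) (Q psi).
Proof. by case: rep => _ h; exact: h. Qed.

Lemma conjc_realM (r : R) z : conjc (r%:C * z) = r%:C * conjc z.
Proof. by rewrite conjcM conjc_real. Qed.

Lemma S_sym : S `<=` Sa.
Proof.
move=> [phi phi'] hp [psi psi'] hq /=.
rewrite (Qrep hp (ex_intro _ _ hq)) [ipH phi psi'](ipC hH) (Qrep hq (ex_intro _ _ hp)).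
by rewrite conjcD conjc_realM -(ipC hH) -(ipC hK).
Qed.

Lemma Qs_of_S f g : S (f, g) -> Qs (Q f, g - c%:C *: f).
Proof.
move=> hfg [psi k] [/= hpsi ->].
by rewrite (ipBl hH) (ipZl hH) (Qrep hfg hpsi) addrAC subrr add0r.
Qed.

Lemma G_Qss : G `<=` Qss.
Proof.
move=> [f k] [/= hf ->] [h l] hq /=.
have := hq (f, Q f) (conj hf erefl) => /= e.
by rewrite (ipC hH) e -(ipC hK).
Qed.

Lemma SF_Sa : SF `<=` Sa.
Proof.
move=> [phi phi'] [k [/= hss hs]] [f g] hfg /=.
have eA := hs (f, Q f) (conj (ex_intro _ _ hfg) erefl).
have eB := hss _ (Qs_of_S hfg).
move: eA eB => /= eA eB.
rewrite (ipBl hH) (ipZl hH) in eA; rewrite (ipBr hH) (ipZr_real hH) in eB.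
have : ipH phi' f = ipK k (Q f) + c%:C * ipH phi f by rewrite -eA subrK.
by rewrite eB subrK.
Qed.

Lemma SF_sym p q : SF p -> SF q -> ipH p.2 q.1 = ipH p.1 q.2.
Proof.
move=> [k [hpk hk]] [l [hql hl]].
have e1 := hql _ hk; have e2 := hpk _ hl.
move: e1 e2 => /= e1 e2.
rewrite (ipBr hH) (ipZr_real hH) in e1; rewrite (ipBr hH) (ipZr_real hH) in e2.
have f1 : ipH q.1 p.2 = ipK l k + c%:C * ipH q.1 p.1 by rewrite e1 subrK.
have f2 : ipH p.1 q.2 = ipK k l + c%:C * ipH p.1 q.1 by rewrite e2 subrK.
by rewrite [ipH p.2 q.1](ipC hH) f1 conjcD conjc_realM -(ipC hK) -(ipC hH) f2.
Qed.

Lemma Sf_char : Sf = rsum S [set p | p.1 = 0 /\ rmul Sa p.2].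
Proof.
apply/seteqP; split.
  move=> [phi phi'] [k [[/= hdom ->] hs]].
  have [g hg] := hdom.
  exists (phi, g), (0, phi' - g); split => //; split.
    split => //= [[psi psi']] hpsi /=.
    have e := hs (psi, Q psi) (conj (ex_intro _ _ hpsi) erefl).
    rewrite /= (ipBl hH) (ipZl hH) in e.
    have e2 := Qrep hg (ex_intro _ _ hpsi).
    rewrite (ip0l hH) (ipBl hH) e2 -e; ring.
  by rewrite addr0 addrC subrK.
move=> p [[f g] [[p0 m] [hfg [[/= ->] hm] ->]]] /=.
rewrite addr0; exists (Q f); split; first by split => //; exists g.
move=> [psi k] [/= hpsi ->] /=.
have hm' : ipH m psi = 0.
  have [psi' hpsi'] := hpsi.
  by rewrite (hm _ hpsi') (ip0l hH).
rewrite (ipBl hH) (ipDl hH) hm' (ipZl hH) (Qrep hfg hpsi); ring.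
Qed.


Lemma hu_pair (u : nat -> H * H) : (forall n, S (u n)) -> forall n, S ((u n).1, (u n).2).
Proof. by move=> hu n; rewrite -surjective_pairing. Qed.

Lemma SF_of_Sa p : Sa p -> dom_form_closure ipH S p.1 -> SF p.
Proof.
case: p => phi phi' hp [u [hu [hconv hcf]]] /=.
have hu' := hu_pair hu.
have hd : forall n, rdom S (u n).1 by move=> n; exists (u n).2; exact: hu'.
have fid : forall m n, ipH ((u n).2 - (u m).2) ((u n).1 - (u m).1) =
   (c * normsq ipH ((u n).1 - (u m).1) + normsq ipK (Q (u n).1 - Q (u m).1))%:C.
  move=> m n; rewrite (Qrep (SB (hu' n) (hu' m)) (domB (hd n) (hd m))) /= (QB (hd n) (hd m)).
  by rewrite (ipxxE hH) (ipxxE hK) rCD rCM.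
have cQ : cauchy_seq ipK (fun n => Q (u n).1).
  move=> e e0.
  have e2 : 0 < e / 2 by rewrite divr_gt0.
  have hc1 : 0 < `|c| + 1 by have := normr_ge0 c; lra.
  have [N1 hN1] := hcf _ e2.
  have [N2 hN2] := conv_cauchy hH hconv (divr_gt0 e2 hc1).
  exists (maxn N1 N2) => m n hm hn.
  have h1 := hN1 n m (leq_trans (leq_maxl _ _) hn) (leq_trans (leq_maxl _ _) hm).
  rewrite fid normC_real ltcR in h1.
  have h2 := hN2 m n (leq_trans (leq_maxr _ _) hm) (leq_trans (leq_maxr _ _) hn).
  apply: (real_bound2 (normsq_ge0 hH _) (normsq_ge0 hK _) h2 h1).
have [k hk] := hKh.2 _ cQ.
exists k; split => /=.
- move=> [h l] hq /=.
  have e : ipK h k = ipH l phi.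
    apply: (ccv_ext (ccv_ipr hK h hk) (ccv_ipr hH l hconv)) => n /=.
    by rewrite (hq ((u n).1, Q (u n).1) (conj (hd n) erefl)).
  by rewrite (ipC hK) e -(ipC hH).
- move=> [psi kq] [/= hpsi ->] /=.
  have [psi' hpsi'] := hpsi.
  have e : ipK (Q psi) k = ipH (psi' - c%:C *: psi) phi.
    apply: (ccv_ext (ccv_ipr hK (Q psi) hk) (ccv_ipr hH (psi' - c%:C *: psi) hconv)) => n /=.
    rewrite (ipBl hH) (ipZl hH) (Qrep hpsi' (hd n)); ring.
  rewrite (ipC hK) e -(ipC hH) (ipBr hH) (ipZr_real hH) (ipBl hH) (ipZl hH).
  by rewrite (hp (psi, psi') hpsi').
Qed.

Lemma G0 : G (0, 0).
Proof. by split; [exact: dom0 | rewrite Q0]. Qed.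

Lemma Glin a (x y : H * K) : G x -> G y -> G (a *: x + y).
Proof.
case: x => x1 x2; case: y => y1 y2 [/= hx1 ->] [/= hy1 ->]; split => /=.
  exact: domL.
by rewrite QL.
Qed.

Lemma SF_dom p : SF p -> dom_form_closure ipH S p.1.
Proof.
case: p => phi phi' [k [hss _]] /=.
move: hss => /= hss.
have hP := prod_hilbert hH hK hHh hKh.
have hcl : closure_set (ipP ipH ipK) G (phi, k).
  apply: (perpperp hP G0 Glin) => [[a b]] hz.
  have hq : Qs (- b, a).
    move=> [psi kk] [/= hpsi ->] /=.
    have := hz (psi, Q psi) (conj hpsi erefl); rewrite /ipP /= => /eqP.
    by rewrite addr_eq0 (ipNl hK) => /eqP.
  have := hss _ hq => /= e.
  by rewrite /ipP /= -e (ipNr hK) addNr.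
case: hcl => w [hw hwc].
have [c1 c2] := (convP_prod hH hK w phi k).1 hwc.
have hw1 : forall n, rdom S (w n).1 by move=> n; case: (hw n).
have hw2 : forall n, (w n).2 = Q (w n).1 by move=> n; case: (hw n).
have [g hg] := choice hw1.
exists (fun n => ((w n).1, g n)); split => //; split => //.
move=> e e0.
have e2 : 0 < e / 2 by rewrite divr_gt0.
have hc1 : 0 < `|c| + 1 by have := normr_ge0 c; lra.
have [N1 hN1] := conv_cauchy hH c1 (divr_gt0 e2 hc1).
have [N2 hN2] := conv_cauchy hK c2 e2.
exists (maxn N1 N2) => m n hm hn /=.
rewrite (Qrep (SB (hg n) (hg m)) (domB (hw1 n) (hw1 m))) /=.
rewrite (QB (hw1 n) (hw1 m)) -!hw2 (ipxxE hH) (ipxxE hK) -rCM -rCD normC_real ltcR.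
have h1 := hN1 n m (leq_trans (leq_maxl _ _) hn) (leq_trans (leq_maxl _ _) hm).
have h2 := hN2 n m (leq_trans (leq_maxr _ _) hn) (leq_trans (leq_maxr _ _) hm).
exact: real_bound (normsq_ge0 hH _) (normsq_ge0 hK _) h1 h2.
Qed.

Lemma dtbar_cl x : dom_form_closure ipH S x -> closure_set ipH (rdom S) x.
Proof.
move=> [u [hu [hc _]]]; exists (fun n => (u n).1); split => // n.
by exists (u n).2; exact: hu_pair.
Qed.

Lemma dom_dtbar x : rdom S x -> dom_form_closure ipH S x.
Proof.
move=> [x' hx]; exists (fun _ => (x, x')); split => //; split.
  exact: conv_const hH x.
move=> e e0; exists 0%N => m n _ _ /=.
by rewrite !subrr (ip0l hH) normr0 ltcR.
Qed.

Lemma Qss_closed : closure_set (ipP ipH ipK) Qss `<=` Qss.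
Proof.
move=> [f g] [w [hw hc]] [a b] hab /=.
have [c1 c2] := (convP_prod hH hK w f g).1 hc.
apply: (ccv_ext (ccv_ipl hK a c2) (ccv_ipl hH b c1)) => n /=.
exact: (hw n (a, b) hab).
Qed.

Lemma SF_surj h : exists q, SF q /\ q.2 - (c - 1)%:C *: q.1 = h.
Proof.
have hP := prod_hilbert hH hK hHh hKh.
have [M0 Ml] := radj_lin hK hH Qs.
have Mlin : forall a (x y : H * K), Qss x -> Qss y -> Qss (a *: x + y).
  by move=> a [x1 x2] [y1 y2] hx hy; exact: (Ml a _ _ hx hy).
have [[f g] hm horth] := proj_exists hP M0 Mlin (h, 0).
have hmq := Qss_closed hm.
have hqs : Qs (g, h - f).
  move=> [psi kk] [/= hpsi ->] /=.
  have hG : G (psi, Q psi) := conj hpsi erefl.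
  have := horth (psi, Q psi) (G_Qss hG); rewrite /ipP /= => /eqP.
  by rewrite addr_eq0 sub0r (ipNl hK) opprK => /eqP.
exists (f, (h - f) + c%:C *: f); split.
  exists g; split => //=; by rewrite addrK.
by rewrite /= rCB rC1 scalerBl scale1r zmA.
Qed.

Lemma SF_sa : radj ipH ipH SF `<=` SF.
Proof.
move=> p hp.
have [q [hq hqe]] := SF_surj (p.2 - (c - 1)%:C *: p.1).
have hqa : radj ipH ipH SF q by move=> t ht; exact: SF_sym hq ht.
have hr := radjB hH hH hp hqa.
have er : p.2 - q.2 = (c - 1)%:C *: (p.1 - q.1).
  by rewrite scalerBr; apply: zmB.
have [q' [hq' hq'e]] := SF_surj (p.1 - q.1).
have := hr q' hq'; rewrite /= er (ipZl hH).
have -> : q'.2 = (p.1 - q.1) + (c - 1)%:C *: q'.1 by rewrite -hq'e subrK.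
rewrite (ipDr hH) (ipZr_real hH) => e.
have : ipH (p.1 - q.1) (p.1 - q.1) = 0.
  by apply: (addIr ((c - 1)%:C * ipH (p.1 - q.1) q'.1)); rewrite add0r -e.
move/(ipxx_eq0 hH)/eqP; rewrite subr_eq0 => /eqP e1.
move: er; rewrite e1 subrr scaler0 => /eqP; rewrite subr_eq0 => /eqP e2.
by have -> : p = q by rewrite [p]surjective_pairing [q]surjective_pairing e1 e2.
Qed.

Lemma dom_sub : rdom S `<=` closure_set ipH (rdom S) `&` rdom Sa.
Proof.
move=> x hx; split; first exact: (closure_sub hH hx).
by have [x' hx'] := hx; exists x'; exact: S_sym.
Qed.

Lemma Sf_eq_of : rdom S = closure_set ipH (rdom S) `&` rdom Sa -> Sf = SF.
Proof.
move=> e; apply/seteqP; split.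
  move=> p hp; rewrite Sf_char in hp.
  case: hp => [[f g] [[z m] [hfg [[/= hz] hm] ->]]]; rewrite /= hz.
  apply: SF_of_Sa => /=.
    have := radjD hH hH (S_sym hfg) hm; by rewrite /= addr0.
  by rewrite addr0; apply: dom_dtbar; exists g.
move=> p hp; rewrite Sf_char.
have hd : rdom S p.1.
  rewrite e; split; first exact: dtbar_cl (SF_dom hp).
  exists p.2; rewrite -surjective_pairing; exact: SF_Sa.
have [g hg] := hd.
exists (p.1, g), (0, p.2 - g); split => //; split.
  split => //=; have := radjB hH hH (SF_Sa hp) (S_sym hg); by rewrite /= subrr.
by rewrite /= addr0 addrC subrK -surjective_pairing.
Qed.

Lemma main_all :
  (SF = [set p | Sa p /\ dom_form_closure ipH S p.1] /\
   (forall T : set (H * H), linrel T -> S `<=` T -> selfadjoint_rel ipH T ->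
      rdom T `<=` dom_form_closure ipH S -> T = SF)) /\
  (Sf = rsum S [set p | p.1 = 0 /\ rmul Sa p.2] /\
   (forall T : set (H * H), linrel T -> S `<=` T -> symmetric_rel ipH T ->
      rdom T `<=` rdom S -> T `<=` Sf)) /\
  ((Sf = SF <-> rdom S = closure_set ipH (rdom S) `&` rdom Sa) /\
   (closed_set ipH (rdom S) -> Sf = SF)).
Proof.
split; [split | split; [split | split; [split | idtac]]].
- apply/seteqP; split => p.
    by move=> hp; split; [exact: SF_Sa | exact: SF_dom].
  by move=> [h1 h2]; exact: SF_of_Sa.
- move=> T linT hST hsa hdom.
  have TSa : T `<=` Sa.
    move=> p hp q hq.
    have hp' : radj ipH ipH T p by rewrite -hsa.
    exact: hp' q (hST q hq).
  have TSF : T `<=` SF.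
    move=> p hp; apply: SF_of_Sa; first exact: TSa.
    by apply: hdom; exists p.2; rewrite -surjective_pairing.
  apply/seteqP; split => // q hq.
  rewrite hsa => p hp /=; exact: SF_sym hq (TSF p hp).
- exact: Sf_char.
- move=> T linT hST hsym hdom p hp; rewrite Sf_char.
  have hpT : T (p.1, p.2) by rewrite -surjective_pairing.
  have [g hg] := hdom p.1 (ex_intro _ p.2 hpT).
  have hT0 : T (0, p.2 - g).
    have := linB linT hp (hST _ hg); by rewrite /= subrr.
  exists (p.1, g), (0, p.2 - g); split => //; split.
    split => //= q hq; exact: (hsym _ hT0 q (hST q hq)).
  by rewrite /= addr0 addrC subrK -surjective_pairing.
- move=> e; apply/seteqP; split; first exact: dom_sub.
  move=> x [hcl [x' hx']].
  have hf : radj ipH ipH Sf (x, x').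
    rewrite Sf_char => q [[f g] [[z m] [hfg [[/= hz] hm] ->]]] /=.
    rewrite hz addr0 (ipDr hH) (hx' (f, g) hfg) /=.
    suff -> : ipH x m = 0 by rewrite addr0.
    apply: (closure_orth hH hcl) => y [y' hy].
    by rewrite (ipC hH) (hm (y, y') hy) /= (ip0l hH); apply/eqP; rewrite conjc_eq0.
  rewrite e in hf; have := SF_sa hf; rewrite -e.
  by move=> [k [[/= hk _] _]].
- exact: Sf_eq_of.
- move=> hcl; apply: Sf_eq_of; apply/seteqP; split; first exact: dom_sub.
  by move=> x [hx _]; exact: hcl.
Qed.
End Main.

Unset Implicit Arguments.
Set Strict Implicit.

Theorem theorem4p1 (R : realType) (H K : lmodType R[i])
  (ipH : H -> H -> R[i]) (ipK : K -> K -> R[i])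
  (S : set (H * H)) (gamma c : R) (Q : H -> K) :
  is_hilbert ipH -> is_hilbert ipK ->
  linrel S -> semibounded_with ipH S gamma ->
  c <= gamma -> representing_map ipH ipK S c Q ->
  let SF := friedrichs ipH ipK S c Q in
  let Sf := weak_friedrichs ipH ipK S c Q in
  (* (a) *)
  (SF = [set p | radj ipH ipH S p /\ dom_form_closure ipH S p.1] /\
   (forall T : set (H * H), linrel T -> S `<=` T -> selfadjoint_rel ipH T ->
      rdom T `<=` dom_form_closure ipH S -> T = SF)) /\
  (* (b) *)
  (Sf = rsum S [set p | p.1 = 0 /\ rmul (radj ipH ipH S) p.2] /\
   (forall T : set (H * H), linrel T -> S `<=` T -> symmetric_rel ipH T ->
      rdom T `<=` rdom S -> T `<=` Sf)) /\
  (* (c) *)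
  ((Sf = SF <-> rdom S = closure_set ipH (rdom S) `&` rdom (radj ipH ipH S)) /\
   (closed_set ipH (rdom S) -> Sf = SF)).
Proof.
move=> hHh hKh linS _ _ rep SF Sf.
exact: (main_all hHh hKh linS rep).
Qed.
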